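(* Let $\mu_0\in\mathbb{C}$ and let $\xi=(\mu_0+z^2)\partial_z+(\bar\mu_0+\bar z^2)\partial_{\bar z}$ be a GCKV in canonical form. The subgroup of $SL(2,\mathbb{C})$ consisting of those $\mathbb{A}$ with $\chi^{\mathbb{A}}_\star(\xi)=\xi$ is $$\mathbb{A}_{\mu_0}=\left\{\begin{pmatrix}\delta&-\gamma\mu_0\\ \gamma&\delta\end{pmatrix}:\ \gamma,\delta\in\mathbb{C},\ \delta^2+\mu_0\gamma^2=1\right\}.$$
   Context: $\mathbb{E}^2$ is the Euclidean plane with Cartesian coordinates $\{x,y\}$ and $z=\frac12(x-iy)$. A GCKV with parameters $\mu\in\mathbb{C}^3$ is $(\mu_0+\mu_1z+\frac12\mu_2z^2)\partial_z+\text{c.c.}$; it is canonical when $\mu_1=0,\mu_2=2$. For $\mathbb{A}=\begin{pmatrix}\alpha&\beta\\ \gamma&\delta\end{pmatrix}\in SL(2,\mathbb{C})$, $\chi^{\mathbb{A}}$ is the Möbius transformation $z\mapsto(\alpha z+\beta)/(\gamma z+\delta)$ and $\chi^{\mathbb{A}}_\star$ denotes push-forward of vector fields (the push-forward of a GCKV is again a GCKV). *)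

(* Defs.v *)
From HB Require Import structures.
From mathcomp Require Import all_boot all_order all_algebra.
From mathcomp Require Import complex.
From mathcomp Require Import reals.
Set Implicit Arguments. Unset Strict Implicit. Unset Printing Implicit Defensive.
Import Order.TTheory GRing.Theory Num.Theory.
Local Open Scope ring_scope.

Section Defs.
Variable R : realType.
Local Notation C := (R[i]).

(* Holomorphic coefficient of the GCKV with parameters (mu0,mu1,mu2):
   (mu0 + mu1 z + 1/2 mu2 z^2) d_z + c.c. *)
Definition gckv_coef (mu0 mu1 mu2 : C) (z : C) : C :=
  mu0 + mu1 * z + (mu2 / 2%:R) * z ^+ 2.

Definition canonical_gckv_coef (mu0 : C) : C -> C := gckv_coef mu0 0 2%:R.

Definition mx_alpha (A : 'M[C]_2) : C := A ord0 ord0.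
Definition mx_beta  (A : 'M[C]_2) : C := A ord0 ord_max.
Definition mx_gamma (A : 'M[C]_2) : C := A ord_max ord0.
Definition mx_delta (A : 'M[C]_2) : C := A ord_max ord_max.

Definition mx2 (a b c d : C) : 'M[C]_2 :=
  \matrix_(i < 2, j < 2)
    if i == ord0 then (if j == ord0 then a else b) else (if j == ord0 then c else d).

Definition in_SL2 (A : 'M[C]_2) : Prop := \det A = 1.

Definition mobius (A : 'M[C]_2) (z : C) : C :=
  (mx_alpha A * z + mx_beta A) / (mx_gamma A * z + mx_delta A).
Definition mobius_deriv (A : 'M[C]_2) (z : C) : C :=
  (mx_alpha A * mx_delta A - mx_beta A * mx_gamma A)
    / (mx_gamma A * z + mx_delta A) ^+ 2.

(* chi^A_* (V d_z + c.c.) = V d_z + c.c. :  the push-forward of the field at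
   chi^A(z) equals the field at chi^A(z), for every z off the pole, i.e.
   d chi^A_z (X(z)) = X(chi^A(z)).  Both the d_z and the d_{bar z} components
   are required (the latter is the complex conjugate of the former). *)
Definition pushforward_fixes (A : 'M[C]_2) (V : C -> C) : Prop :=
  forall z : C, mx_gamma A * z + mx_delta A != 0 ->
    V (mobius A z) = mobius_deriv A z * V z /\
    (V (mobius A z))^* = (mobius_deriv A z)^* * (V z)^*.

End Defs.

(* Main.v *)
Require Import Defs.
From HB Require Import structures.
From mathcomp Require Import all_boot all_order all_algebra.
From mathcomp Require Import complex.
From mathcomp Require Import reals.
From mathcomp Require Import ring.
Import Order.TTheory GRing.Theory Num.Theory.
Local Open Scope ring_scope.

Lemma det2 (R : realType) (A : 'M[R[i]]_2) :
  \det A = mx_alpha A * mx_delta A - mx_beta A * mx_gamma A.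
Proof.
rewrite (expand_det_row _ ord0) !big_ord_recl big_ord0 /cofactor !det_mx11 !mxE /=.
rewrite /mx_alpha /mx_beta /mx_gamma /mx_delta.
rewrite /bump /= !expr0 !expr1.
have -> : lift ord0 (0 : 'I_1) = ord_max :> 'I_2 by apply/val_inj.
have -> : lift (ord_max : 'I_2) (0 : 'I_1) = ord0 :> 'I_2 by apply/val_inj.
ring.
Qed.

Lemma two_nz (R : realType) : (2%:R : R[i]) != 0.
Proof. by rewrite pnatr_eq0. Qed.


Lemma quad3 (R : realType) (A B C0 u v w : R[i]) :
  u != v -> v != w -> u != w ->
  A * u ^+ 2 + B * u + C0 = 0 -> A * v ^+ 2 + B * v + C0 = 0 ->
  A * w ^+ 2 + B * w + C0 = 0 -> A = 0 /\ B = 0 /\ C0 = 0.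
Proof.
move=> uv vw uw hu hv hw.
have e1 : A * (u + v) + B = 0.
  have : (u - v) * (A * (u + v) + B) = 0.
    by rewrite -[RHS](subrr 0) -{1}hu -hv; ring.
  by move/eqP; rewrite mulf_eq0 subr_eq0 (negbTE uv) => /eqP.
have e2 : A * (u + w) + B = 0.
  have : (u - w) * (A * (u + w) + B) = 0.
    by rewrite -[RHS](subrr 0) -{1}hu -hw; ring.
  by move/eqP; rewrite mulf_eq0 subr_eq0 (negbTE uw) => /eqP.
have hA : A = 0.
  have : (v - w) * A = 0 by rewrite -[RHS](subrr 0) -{1}e1 -e2; ring.
  by move/eqP; rewrite mulf_eq0 subr_eq0 (negbTE vw) => /eqP.
have hB : B = 0 by move: e1; rewrite hA mul0r add0r.
by split=> //; split=> //; move: hu; rewrite hA hB !mul0r !add0r.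
Qed.

Lemma quad_all (R : realType) (A B C0 c d : R[i]) :
  (c != 0) || (d != 0) ->
  (forall z, c * z + d != 0 -> A * z ^+ 2 + B * z + C0 = 0) ->
  A = 0 /\ B = 0 /\ C0 = 0.
Proof.
move=> hcd H.
have n12 : (1 : R[i]) != 2%:R by rewrite (eqr_nat _ 1 2).
have n23 : (2%:R : R[i]) != 3%:R by rewrite eqr_nat.
have n13 : (1 : R[i]) != 3%:R by rewrite (eqr_nat _ 1 3).
have [c0|c0] := eqVneq c 0.
  move: hcd; rewrite c0 eqxx /= => hd.
  apply: (@quad3 _ _ _ _ 0 1 2%:R).
  - by rewrite eq_sym oner_eq0.
  - exact: n12.
  - by rewrite eq_sym pnatr_eq0.
  - by apply: H; rewrite c0 mul0r add0r.
  - by apply: H; rewrite c0 mul0r add0r.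
  - by apply: H; rewrite c0 mul0r add0r.
have pt : forall k : R[i], c * ((k - d) / c) + d = k.
  by move=> k; field.
have inj : forall k l : R[i], k != l -> (k - d) / c != (l - d) / c.
  move=> k l kl; apply: contra kl => /eqP e.
  by rewrite -(pt k) -(pt l) e.
apply: (@quad3 _ _ _ _ ((1 - d) / c) ((2%:R - d) / c) ((3%:R - d) / c)).
- exact: inj.
- exact: inj.
- exact: inj.
- by apply: H; rewrite pt oner_eq0.
- by apply: H; rewrite pt pnatr_eq0.
- by apply: H; rewrite pt pnatr_eq0.
Qed.

Lemma Vsimp (R : realType) (mu0 z : R[i]) : canonical_gckv_coef mu0 z = mu0 + z ^+ 2.
Proof. rewrite /canonical_gckv_coef /gckv_coef divff ?two_nz //; ring. Qed.

Theorem corollary7p3 (R : realType) (mu0 : R[i]) (A : 'M[R[i]]_2) :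
  in_SL2 A ->
  (pushforward_fixes A (canonical_gckv_coef mu0) <->
   exists gamma delta : R[i],
     delta ^+ 2 + mu0 * gamma ^+ 2 = 1 /\
     A = mx2 delta (- (gamma * mu0)) gamma delta).
Proof.
rewrite /in_SL2 det2 /pushforward_fixes /mobius /mobius_deriv.
have eA : A = mx2 (mx_alpha A) (mx_beta A) (mx_gamma A) (mx_delta A).
  apply/matrixP => i j; rewrite !mxE /mx_alpha /mx_beta /mx_gamma /mx_delta.
  by case: i => [[|[|]]] //= hi; case: j => [[|[|]]] //= hj;
     congr (A _ _); apply/val_inj.
move: eA; set a := mx_alpha A; set b := mx_beta A; set c := mx_gamma A;
  set d := mx_delta A => eA Hdet.
split.
- move=> H.
  have key : forall z, c * z + d != 0 ->
     (a ^+ 2 + mu0 * c ^+ 2 - 1) * z ^+ 2 + (2%:R * (a * b + mu0 * c * d)) * z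
     + (b ^+ 2 + mu0 * d ^+ 2 - mu0) = 0.
    move=> z hz; have [H1 _] := H z hz; move: H1; rewrite !Vsimp Hdet => H1.
    transitivity ((mu0 + ((a * z + b) / (c * z + d)) ^+ 2) * (c * z + d) ^+ 2
        - (1 / (c * z + d) ^+ 2 * (mu0 + z ^+ 2)) * (c * z + d) ^+ 2).
      by field.
    by rewrite H1 subrr.
  have hcd : (c != 0) || (d != 0).
    rewrite -negb_and; apply/negP => /andP [/eqP c0 /eqP d0].
    by move: Hdet; rewrite c0 d0 !mulr0 subr0 => /eqP; rewrite eq_sym oner_eq0.
  have [E1 [E2 E3]] := @quad_all R _ _ _ _ _ hcd key.
  have E2' : a * b + mu0 * c * d = 0.
    by move/eqP: E2; rewrite mulf_eq0 (negbTE (two_nz R)) /= => /eqP.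
  have ad : a = d.
    apply/eqP; rewrite -subr_eq0; apply/eqP.
    transitivity (- a * (a * d - b * c - 1) + d * (a ^+ 2 + mu0 * c ^+ 2 - 1)
                  - c * (a * b + mu0 * c * d)); first by ring.
    by rewrite Hdet E1 E2' subrr; ring.
  have bc : b = - (c * mu0).
    apply/eqP; rewrite -subr_eq0; apply/eqP.
    transitivity (- b * (a * d - b * c - 1) + d * (a * b + mu0 * c * d)
                  - c * (b ^+ 2 + mu0 * d ^+ 2 - mu0)); first by ring.
    by rewrite Hdet E3 E2' subrr; ring.
  exists c, d; split; last by rewrite eA ad bc.
  by move: E1; rewrite ad => /eqP; rewrite subr_eq0 => /eqP <-; ring.
- move=> [g [dl [Hg eAg]]] z.
  have ha : a = dl by rewrite /a eAg /mx_alpha !mxE.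
  have hb : b = - (g * mu0) by rewrite /b eAg /mx_beta !mxE.
  have hc : c = g by rewrite /c eAg /mx_gamma !mxE.
  have hd : d = dl by rewrite /d eAg /mx_delta !mxE.
  rewrite ha hb hc hd !Vsimp => hz.
  have e1 : mu0 + ((dl * z + - (g * mu0)) / (g * z + dl)) ^+ 2 =
     (dl * dl - - (g * mu0) * g) / (g * z + dl) ^+ 2 * (mu0 + z ^+ 2).
    have -> : dl * dl - - (g * mu0) * g = 1 by rewrite -Hg; ring.
    apply/eqP; rewrite -subr_eq0; apply/eqP.
    transitivity (((mu0 + z ^+ 2) * ((dl ^+ 2 + mu0 * g ^+ 2) - 1)) / (g * z + dl) ^+ 2).
      by field.
    by rewrite Hg subrr mulr0 mul0r.
  by split=> //; rewrite e1 rmorphM.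
Qed.
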